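(* Let $H$ be a $k$-linear semi-Hopf category and $A$ a right $H$-comodule category with $B=A^{{\rm co}H}$. Assume that (1) each $A_{xy}$ is a finitely generated projective left $B_x$-module; (2) each $H_{xy}$ is a finitely generated projective $k$-module; (3) for all $x,y\in X$ the maps $\delta^x_{xy}:{\rm Hom}_k(H_{xy},A_{yx})\to{}_{B_x}{\rm Hom}(A_{xy},A_{xx})$ and $\delta^x_{yy}:{\rm Hom}_k(H_{xy},A_{yy})\to{}_{B_x}{\rm Hom}(A_{xy},A_{xy})$, given by $\delta(g)(a)=a_{[0]}g(a_{[1]})$, are bijective. Then $A$ is an $H$-Galois category extension of $B$, i.e. all maps ${\rm can}^z_{xy}$ are bijective.
   Context: Let $k$ be a commutative ring; unadorned $\otimes$ is over $k$. A $k$-linear category $A$ with class of objects $X$ consists of $k$-modules $A_{xy}$, associative compositions $A_{xy}\otimes A_{yz}\to A_{xz}$, $a\otimes b\mapsto ab$, and units $1_x\in A_{xx}$. A $k$-linear semi-Hopf category $H$ (objects $X$) is a $k$-linear category in which each $H_{xy}$ is a $k$-coalgebra with $\Delta_{xy}(h)=h_{(1)}\otimes h_{(2)}$ and counit $\varepsilon_{xy}$, such that $\Delta_{xz}(hh')=h_{(1)}h'_{(1)}\otimes h_{(2)}h'_{(2)}$, $\Delta_{xx}(1_x)=1_x\otimes1_x$, $\varepsilon_{xz}(hh')=\varepsilon_{xy}(h)\varepsilon_{yz}(h')$, $\varepsilon_{xx}(1_x)=1$. A right $H$-comodule category is a $k$-linear category $A$ with objects $X$ such that each $A_{xy}$ is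 a right $H_{xy}$-comodule, $\rho_{xy}(a)=a_{[0]}\otimes a_{[1]}$, with $\rho_{xz}(ab)=a_{[0]}b_{[0]}\otimes a_{[1]}b_{[1]}$ and $\rho_{xx}(1_x)=1_x\otimes1_x$. Its coinvariants are $B_x=\{a\in A_{xx}\mid\rho_{xx}(a)=a\otimes1_x\}$; $A_{xy}$ is a $B_x$-$B_y$-bimodule by multiplication. The canonical maps are ${\rm can}^z_{xy}:A_{zx}\otimes_{B_x}A_{xy}\to A_{zy}\otimes H_{xy}$, $a\otimes_{B_x}a'\mapsto aa'_{[0]}\otimes a'_{[1]}$; $A$ is an $H$-Galois category extension of $B$ if they are all bijective. *)

(* Defs.v *)
From HB Require Import structures.
From mathcomp Require Import all_boot all_order all_algebra.
Set Implicit Arguments. Unset Strict Implicit. Unset Printing Implicit Defensive.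
Import GRing.Theory.
Local Open Scope ring_scope.

(* Tensor products, presented as setoids.                                    *)
(* An element of M (x)_bal N is a finite formal sum of elementary tensors    *)
(* m (x) n, represented by a list of pairs; [::] is 0 and ++ is addition.    *)
(* teq bal is the congruence generated by biadditivity, zeros and the        *)
(* balancing relation bal.  Since [::(m,n)] ++ [::(-m,n)] ~ [::(0,n)] ~ [::],*)
(* the quotient is an abelian group, namely the usual tensor product.        *)
Section Tensor.
Variables (M N : zmodType) (bal : M -> N -> M -> N -> Prop).
Inductive teq : seq (M * N) -> seq (M * N) -> Prop :=
| teq_refl s : teq s s
| teq_sym s t : teq s t -> teq t s
| teq_trans s t u : teq s t -> teq t u -> teq s u
| teq_cat s s' t t' : teq s s' -> teq t t' -> teq (s ++ t) (s' ++ t')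
| teq_comm s t : teq (s ++ t) (t ++ s)
| teq_addl m m' n : teq [:: (m + m', n)] [:: (m, n); (m', n)]
| teq_addr m n n' : teq [:: (m, n + n')] [:: (m, n); (m, n')]
| teq_0l n : teq [:: (0, n)] [::]
| teq_0r m : teq [:: (m, 0)] [::]
| teq_bal m n m' n' : bal m n m' n' -> teq [:: (m, n)] [:: (m', n')].
End Tensor.

Definition kbal (k : pzRingType) (M N : lmodType k) (m : M) (n : N) (m' : M) (n' : N) :=
  exists c : k, m = c *: m' /\ n' = c *: n.

Definition teqk (k : pzRingType) (M N : lmodType k) := teq (@kbal k M N).

Section Tensor3.
Variables (k : pzRingType) (M N P : lmodType k).
Inductive teq3 : seq (M * N * P) -> seq (M * N * P) -> Prop :=
| teq3_refl s : teq3 s s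
| teq3_sym s t : teq3 s t -> teq3 t s
| teq3_trans s t u : teq3 s t -> teq3 t u -> teq3 s u
| teq3_cat s s' t t' : teq3 s s' -> teq3 t t' -> teq3 (s ++ t) (s' ++ t')
| teq3_comm s t : teq3 (s ++ t) (t ++ s)
| teq3_add1 m m' n p : teq3 [:: (m + m', n, p)] [:: (m, n, p); (m', n, p)]
| teq3_add2 m n n' p : teq3 [:: (m, n + n', p)] [:: (m, n, p); (m, n', p)]
| teq3_add3 m n p p' : teq3 [:: (m, n, p + p')] [:: (m, n, p); (m, n, p')]
| teq3_01 n p : teq3 [:: (0, n, p)] [::]
| teq3_02 m p : teq3 [:: (m, 0, p)] [::]
| teq3_03 m n : teq3 [:: (m, n, 0)] [::]
| teq3_bal12 (c : k) m n p : teq3 [:: (c *: m, n, p)] [:: (m, c *: n, p)]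
| teq3_bal23 (c : k) m n p : teq3 [:: (m, c *: n, p)] [:: (m, n, c *: p)].
End Tensor3.

Definition tscale (k : pzRingType) (M : lmodType k) (N : Type) (c : k)
  (s : seq (M * N)) : seq (M * N) := [seq (c *: p.1, p.2) | p <- s].

Section Categories.
Variables (k : comPzRingType) (X : Type).

Record lin_cat (C : X -> X -> lmodType k)
  (mul : forall x y z, C x y -> C y z -> C x z) (one : forall x, C x x) : Prop := {
  lc_linl : forall x y z (c : k) (a a' : C x y) (b : C y z),
      mul _ _ _ (c *: a + a') b = c *: mul _ _ _ a b + mul _ _ _ a' b;
  lc_linr : forall x y z (c : k) (a : C x y) (b b' : C y z),
      mul _ _ _ a (c *: b + b') = c *: mul _ _ _ a b + mul _ _ _ a b';
  lc_assoc : forall x y z w (a : C x y) (b : C y z) (d : C z w),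
      mul _ _ _ (mul _ _ _ a b) d = mul _ _ _ a (mul _ _ _ b d);
  lc_1l : forall x y (a : C x y), mul _ _ _ (one x) a = a;
  lc_1r : forall x y (a : C x y), mul _ _ _ a (one y) = a }.

Variables (H : X -> X -> lmodType k)
  (mulH : forall x y z, H x y -> H y z -> H x z) (oneH : forall x, H x x)
  (Delta : forall x y, H x y -> seq (H x y * H x y))
  (eps : forall x y, H x y -> k).

Record semi_hopf_cat : Prop := {
  sh_lincat : lin_cat mulH oneH;
  sh_Delta_lin : forall x y (c : k) (h h' : H x y),
      teqk (Delta (c *: h + h')) (tscale c (Delta h) ++ Delta h');
  sh_eps_lin : forall x y (c : k) (h h' : H x y),
      eps (c *: h + h') = c * eps h + eps h';
  sh_coassoc : forall x y (h : H x y),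
      teq3 (flatten [seq [seq (q.1, q.2, p.2) | q <- Delta p.1] | p <- Delta h])
           (flatten [seq [seq (p.1, q.1, q.2) | q <- Delta p.2] | p <- Delta h]);
  sh_counitl : forall x y (h : H x y), \sum_(p <- Delta h) eps p.1 *: p.2 = h;
  sh_counitr : forall x y (h : H x y), \sum_(p <- Delta h) eps p.2 *: p.1 = h;
  sh_Delta_mul : forall x y z (h : H x y) (h' : H y z),
      teqk (Delta (mulH h h'))
           [seq (mulH p.1 q.1, mulH p.2 q.2) | p <- Delta h, q <- Delta h'];
  sh_Delta_one : forall x, teqk (Delta (oneH x)) [:: (oneH x, oneH x)];
  sh_eps_mul : forall x y z (h : H x y) (h' : H y z),
      eps (mulH h h') = eps h * eps h';
  sh_eps_one : forall x, eps (oneH x) = 1 }.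

Variables (A : X -> X -> lmodType k)
  (mulA : forall x y z, A x y -> A y z -> A x z) (oneA : forall x, A x x)
  (rho : forall x y, A x y -> seq (A x y * H x y)).

Record comodule_cat : Prop := {
  cc_lincat : lin_cat mulA oneA;
  cc_rho_lin : forall x y (c : k) (a a' : A x y),
      teqk (rho (c *: a + a')) (tscale c (rho a) ++ rho a');
  cc_coassoc : forall x y (a : A x y),
      teq3 (flatten [seq [seq (q.1, q.2, p.2) | q <- rho p.1] | p <- rho a])
           (flatten [seq [seq (p.1, q.1, q.2) | q <- Delta p.2] | p <- rho a]);
  cc_counit : forall x y (a : A x y), \sum_(p <- rho a) eps p.2 *: p.1 = a;
  cc_rho_mul : forall x y z (a : A x y) (b : A y z),
      teqk (rho (mulA a b))
           [seq (mulA p.1 q.1, mulH p.2 q.2) | p <- rho a, q <- rho b];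
  cc_rho_one : forall x, teqk (rho (oneA x)) [:: (oneA x, oneH x)] }.

Definition coinv x (b : A x x) : Prop := teqk (rho b) [:: (b, oneH x)].

(* A x y is a finitely generated projective left B_x-module: a B_x-linear  *)
(* retract of some free module B_x^n.                                       *)
Definition fgp_left_coinv (x y : X) : Prop :=
  exists (n : nat) (f : A x y -> 'I_n -> A x x) (g : ('I_n -> A x x) -> A x y),
    [/\ forall a i, coinv (f a i),
        forall (b : A x x) (a a' : A x y), coinv b ->
           forall i, f (mulA b a + a') i = mulA b (f a i) + f a' i,
        forall (b : A x x) (v w : 'I_n -> A x x), coinv b ->
           (forall i, coinv (v i)) -> (forall i, coinv (w i)) ->
           g (fun i => mulA b (v i) + w i) = mulA b (g v) + g w
      & forall a, g (f a) = a].

Definition Bbal (z x y : X) (a : A z x) (a' : A x y) (a1 : A z x) (a1' : A x y) :=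
  exists b : A x x, [/\ coinv b, a = mulA a1 b & a1' = mulA b a'].

Definition teqB (z x y : X) := teq (@Bbal z x y).

Definition klin (M N : lmodType k) (g : M -> N) :=
  forall (c : k) (m m' : M), g (c *: m + m') = c *: g m + g m'.
Definition Blin x y w (f : A x y -> A x w) :=
  forall (b : A x x) (a a' : A x y), coinv b ->
    f (mulA b a + a') = mulA b (f a) + f a'.

Definition delta x y w (g : H x y -> A y w) (a : A x y) : A x w :=
  \sum_(p <- rho a) mulA p.1 (g p.2).

Definition delta_bij (x y w : X) : Prop :=
  (forall g g' : H x y -> A y w, klin g -> klin g' ->
     (forall a, delta g a = delta g' a) -> forall h, g h = g' h) /\
  (forall f : A x y -> A x w, Blin f ->
     exists g : H x y -> A y w, klin g /\ forall a, delta g a = f a).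

Definition can (z x y : X) (s : seq (A z x * A x y)) : seq (A z y * H x y) :=
  flatten [seq [seq (mulA p.1 q.1, q.2) | q <- rho p.2] | p <- s].

Definition can_bij (z x y : X) : Prop :=
  [/\ forall s t : seq (A z x * A x y), teqB s t -> teqk (can s) (can t),
      forall s t : seq (A z x * A x y), teqk (can s) (can t) -> teqB s t
    & forall u : seq (A z y * H x y), exists s : seq (A z x * A x y),
        teqk (can s) u].

End Categories.

(* Main.v *)
Require Import Defs.
From HB Require Import structures.
From mathcomp Require Import all_boot all_order all_algebra.
From Stdlib Require Import FunctionalExtensionality IndefiniteDescription.
Set Implicit Arguments. Unset Strict Implicit. Unset Printing Implicit Defensive.
Import GRing.Theory.
Local Open Scope ring_scope.


Arguments teq_refl {M N bal}.
Arguments teq_sym {M N bal s t}.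
Arguments teq_trans {M N bal s t u}.
Arguments teq_cat {M N bal s s' t t'}.
Arguments teq_comm {M N bal}.
Arguments teq_addl {M N bal}.
Arguments teq_addr {M N bal}.
Arguments teq_0l {M N bal}.
Arguments teq_0r {M N bal}.
Arguments teq_bal {M N bal}.

Definition Lift (S T : Type) (phi : S -> seq T) (s : seq S) := flatten (map phi s).

Lemma Lift_cat S T (phi : S -> seq T) s t : Lift phi (s ++ t) = Lift phi s ++ Lift phi t.
Proof. by rewrite /Lift map_cat flatten_cat. Qed.
Lemma Lift_cons S T (phi : S -> seq T) p s : Lift phi (p :: s) = phi p ++ Lift phi s.
Proof. by []. Qed.
Lemma Lift1 S T (phi : S -> seq T) p : Lift phi [:: p] = phi p.
Proof. by rewrite /Lift /= cats0. Qed.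

Lemma perm_mid (T : eqType) (a : T) A B : perm_eq (a :: A ++ B) (A ++ a :: B).
Proof. by rewrite perm_sym -[a :: B]cat1s perm_catCA. Qed.

Section Gen.
Variables (M N : zmodType) (bal : M -> N -> M -> N -> Prop).
Local Notation teq := (teq bal).

Lemma teq_catl s t u : teq t u -> teq (s ++ t) (s ++ u).
Proof. by move=> h; apply: teq_cat => //; apply: teq_refl. Qed.
Lemma teq_catr s t u : teq t u -> teq (t ++ s) (u ++ s).
Proof. by move=> h; apply: teq_cat => //; apply: teq_refl. Qed.

Lemma teq_cons a b s t : teq [:: a] [:: b] -> teq s t -> teq (a :: s) (b :: t).
Proof. move=> h1 h2; exact (teq_cat h1 h2). Qed.

Lemma teq_assoc s t u : teq ((s ++ t) ++ u) (s ++ (t ++ u)).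
Proof. rewrite catA; exact: teq_refl. Qed.

Lemma teq_perm s t : perm_eq s t -> teq s t.
Proof.
elim: s t => [|x s IH] t.
  by case: t => [|y t] pt; [apply: teq_refl | move/perm_size: pt].
move=> pxt.
have xt : x \in t by rewrite -(perm_mem pxt) mem_head.
case/splitPr: xt pxt => t1 t2 pxt.
have p2 : perm_eq s (t1 ++ t2).
  by rewrite -(perm_cons x); apply: (perm_trans pxt); rewrite perm_sym; exact: perm_mid.
apply: teq_trans (_ : teq ([:: x] ++ (t1 ++ t2)) _).
  exact: (teq_catl [:: x] (IH _ p2)).
have e1 : [:: x] ++ t1 ++ t2 = ([:: x] ++ t1) ++ t2 by rewrite catA.
have e2 : t1 ++ x :: t2 = (t1 ++ [:: x]) ++ t2 by rewrite -catA.
rewrite e1 e2; apply: teq_catr; apply: teq_comm.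
Qed.

Lemma teq_mapF (T : Type) (F G : T -> seq (M * N)) l :
  (forall x, teq (F x) (G x)) -> teq (Lift F l) (Lift G l).
Proof.
move=> h; elim: l => [|x l IH]; first exact: teq_refl.
rewrite !Lift_cons; exact: teq_cat.
Qed.

Lemma teq_map (T : Type) (F G : T -> M * N) l :
  (forall x, teq [:: F x] [:: G x]) -> teq (map F l) (map G l).
Proof.
move=> h; elim: l => [|x l IH]; first exact: teq_refl.
exact: (teq_cons (h x) IH).
Qed.

Lemma teq_splitl (I : Type) (u v : I -> M) (G : I -> N) l :
  teq [seq (u i + v i, G i) | i <- l] ([seq (u i, G i) | i <- l] ++ [seq (v i, G i) | i <- l]).
Proof.
elim: l => [|i l IH]; first exact: teq_refl.
rewrite /=. apply: teq_trans (_ : teq ([:: (u i, G i); (v i, G i)] ++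
   ([seq (u i, G i) | i <- l] ++ [seq (v i, G i) | i <- l])) _).
  exact (teq_cat (teq_addl _ _ _) IH).
apply: teq_perm. by rewrite /= perm_cons; exact: perm_mid.
Qed.

Lemma teq_splitr (I : Type) (u v : I -> N) (G : I -> M) l :
  teq [seq (G i, u i + v i) | i <- l] ([seq (G i, u i) | i <- l] ++ [seq (G i, v i) | i <- l]).
Proof.
elim: l => [|i l IH]; first exact: teq_refl.
rewrite /=. apply: teq_trans (_ : teq ([:: (G i, u i); (G i, v i)] ++
   ([seq (G i, u i) | i <- l] ++ [seq (G i, v i) | i <- l])) _).
  exact (teq_cat (teq_addr _ _ _) IH).
apply: teq_perm. by rewrite /= perm_cons; exact: perm_mid.
Qed.

Lemma teq_zerol (I : Type) (G : I -> N) l : teq [seq (0, G i) | i <- l] [::].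
Proof.
elim: l => [|i l IH]; first exact: teq_refl.
exact (@teq_cat _ _ _ _ [::] _ [::] (teq_0l _) IH).
Qed.

Lemma teq_zeror (I : Type) (G : I -> M) l : teq [seq (G i, 0) | i <- l] [::].
Proof.
elim: l => [|i l IH]; first exact: teq_refl.
exact (@teq_cat _ _ _ _ [::] _ [::] (teq_0r _) IH).
Qed.

Lemma teq_sumr (I : Type) m (F : I -> N) J :
  teq [:: (m, \sum_(j <- J) F j)] [seq (m, F j) | j <- J].
Proof.
elim: J => [|j J IH]; first by rewrite big_nil; apply: teq_0r.
rewrite big_cons /=. apply: (teq_trans (teq_addr (bal:=bal) m (F j) _)).
exact: (teq_cons (teq_refl _) IH).
Qed.

Lemma teq_suml (I : Type) n (F : I -> M) J :
  teq [:: (\sum_(j <- J) F j, n)] [seq (F j, n) | j <- J].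
Proof.
elim: J => [|j J IH]; first by rewrite big_nil; apply: teq_0l.
rewrite big_cons /=. apply: (teq_trans (teq_addl (bal:=bal) _ _ _)).
exact: (teq_cons (teq_refl _) IH).
Qed.

Lemma teq_groupl (Q I : Type) (F : Q -> I -> M) (G : I -> N) qs l :
  teq (Lift (fun q => [seq (F q i, G i) | i <- l]) qs)
      [seq (\sum_(q <- qs) F q i, G i) | i <- l].
Proof.
elim: qs => [|q qs IH].
  rewrite /Lift /=. apply: teq_sym.
  under eq_map => i do rewrite big_nil. exact: teq_zerol.
rewrite Lift_cons. apply: (teq_trans (teq_catl _ IH)); apply: teq_sym.
under eq_map => i do rewrite big_cons. exact: teq_splitl.
Qed.

Lemma teq_neg s : teq ([seq (- p.1, p.2) | p <- s] ++ s) [::].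
Proof.
elim: s => [|[m n] s IH]; first exact: teq_refl.
apply: teq_trans (_ : teq ([:: (-m, n); (m, n)] ++ ([seq (- p.1, p.2) | p <- s] ++ s)) _).
  apply: teq_perm. by rewrite /= perm_cons perm_sym; exact: perm_mid.
have h1 : teq [:: (-m, n); (m, n)] [::].
  apply: (teq_trans (teq_sym (teq_addl _ _ _))).
  by rewrite addNr; apply: teq_0l.
exact (teq_cat h1 IH).
Qed.

Lemma teq_dup s : teq s (s ++ s) -> teq s [::].
Proof.
move=> h.
apply: teq_trans (_ : teq (s ++ ([seq (- p.1, p.2) | p <- s] ++ s)) _).
  apply: teq_sym. rewrite -[X in teq _ X]cats0. apply: teq_catl; exact: teq_neg.
apply: teq_trans (_ : teq ((s ++ s) ++ [seq (- p.1, p.2) | p <- s]) _).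
  apply: teq_perm. by rewrite -catA perm_cat2l perm_catC.
apply: teq_trans (_ : teq (s ++ [seq (- p.1, p.2) | p <- s]) _).
  apply: teq_catr; exact: teq_sym.
exact: (teq_trans (teq_comm _ _) (teq_neg s)).
Qed.

Lemma sum_inv (V : zmodType) (beta : M -> N -> V) :
  (forall m m' n, beta (m + m') n = beta m n + beta m' n) ->
  (forall m n n', beta m (n + n') = beta m n + beta m n') ->
  (forall m n m' n', bal m n m' n' -> beta m n = beta m' n') ->
  forall s t, teq s t -> \sum_(p <- s) beta p.1 p.2 = \sum_(p <- t) beta p.1 p.2.
Proof.
move=> hl hr hb.
have b0l n : beta 0 n = 0.
  by apply/eqP; rewrite -(addrI _ (_ : beta 0 n + beta 0 n = beta 0 n + 0)) // addr0 -hl addr0.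
have b0r m : beta m 0 = 0.
  by apply: (@addrI _ (beta m 0)); rewrite addr0 -hr addr0.
move=> s t; elim => {s t}.
- by [].
- by move=> s t _ ->.
- by move=> s t u _ -> _ ->.
- by move=> s s' t t' _ h1 _ h2; rewrite !big_cat h1 h2.
- move=> s t; rewrite !big_cat /=; exact: addrC.
- by move=> m m' n; rewrite !big_cons !big_nil /= hl !addr0.
- by move=> m n n'; rewrite !big_cons !big_nil /= hr !addr0.
- by move=> n; rewrite big_cons !big_nil /= b0l addr0.
- by move=> m; rewrite big_cons !big_nil /= b0r addr0.
- by move=> m n m' n' hh; rewrite !big_cons !big_nil /= (hb _ _ _ _ hh).
Qed.

End Gen.

Section Lift.
Variables (M N M' N' : zmodType) (bal : M -> N -> M -> N -> Prop)
  (bal' : M' -> N' -> M' -> N' -> Prop) (phi : M * N -> seq (M' * N')).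
Hypotheses
  (hl : forall m m' n, teq bal' (phi (m + m', n)) (phi (m, n) ++ phi (m', n)))
  (hr : forall m n n', teq bal' (phi (m, n + n')) (phi (m, n) ++ phi (m, n')))
  (h0l : forall n, teq bal' (phi (0, n)) [::])
  (h0r : forall m, teq bal' (phi (m, 0)) [::])
  (hb : forall m n m' n', bal m n m' n' -> teq bal' (phi (m, n)) (phi (m', n'))).

Lemma teq_Lift s t : teq bal s t -> teq bal' (Lift phi s) (Lift phi t).
Proof.
elim => {s t}.
- move=> s; exact: teq_refl.
- move=> s t _ h; exact: teq_sym.
- move=> s t u _ h1 _ h2; exact: teq_trans h1 h2.
- move=> s s' t t' _ h1 _ h2; rewrite !Lift_cat; exact: teq_cat.
- move=> s t; rewrite !Lift_cat; exact: teq_comm.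
- move=> m m' n; rewrite /Lift /= !cats0; exact: hl.
- move=> m n n'; rewrite /Lift /= !cats0; exact: hr.
- move=> n; rewrite /Lift /= !cats0; exact: h0l.
- move=> m; rewrite /Lift /= !cats0; exact: h0r.
- move=> m n m' n' h; rewrite /Lift /= !cats0; exact: hb.
Qed.
End Lift.



Section LC.
Variables (k : comPzRingType) (X : Type) (C : X -> X -> lmodType k)
  (mul : forall x y z, C x y -> C y z -> C x z) (one : forall x, C x x).
Hypothesis hC : lin_cat mul one.

Lemma lcm_addl x y z (a a' : C x y) (b : C y z) : mul (a + a') b = mul a b + mul a' b.
Proof. by have := lc_linl hC 1 a a' b; rewrite !scale1r. Qed.
Lemma lcm_addr x y z (a : C x y) (b b' : C y z) : mul a (b + b') = mul a b + mul a b'.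
Proof. by have := lc_linr hC 1 a b b'; rewrite !scale1r. Qed.
Lemma lcm_0l x y z (b : C y z) : mul (0 : C x y) b = 0.
Proof. by apply: (@addrI _ (mul (0 : C x y) b)); rewrite -lcm_addl !addr0. Qed.
Lemma lcm_0r x y z (a : C x y) : mul a (0 : C y z) = 0.
Proof. by apply: (@addrI _ (mul a (0 : C y z))); rewrite -lcm_addr !addr0. Qed.
Lemma lcm_scalel x y z c (a : C x y) (b : C y z) : mul (c *: a) b = c *: mul a b.
Proof. by have := lc_linl hC c a 0 b; rewrite !addr0 lcm_0l addr0. Qed.
Lemma lcm_scaler x y z c (a : C x y) (b : C y z) : mul a (c *: b) = c *: mul a b.
Proof. by have := lc_linr hC c a b 0; rewrite !addr0 lcm_0r addr0. Qed.
Lemma lcm_suml x y z (I : Type) (r : seq I) (F : I -> C x y) (b : C y z) :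
  mul (\sum_(i <- r) F i) b = \sum_(i <- r) mul (F i) b.
Proof.
elim: r => [|i r IH]; first by rewrite !big_nil lcm_0l.
by rewrite !big_cons lcm_addl IH.
Qed.
Lemma lcm_sumr x y z (I : Type) (r : seq I) (F : I -> C y z) (a : C x y) :
  mul a (\sum_(i <- r) F i) = \sum_(i <- r) mul a (F i).
Proof.
elim: r => [|i r IH]; first by rewrite !big_nil lcm_0r.
by rewrite !big_cons lcm_addr IH.
Qed.
End LC.

Lemma klin_add (k : comPzRingType) (M N : lmodType k) (g : M -> N) :
  klin g -> forall m m', g (m + m') = g m + g m'.
Proof. by move=> h m m'; have := h 1 m m'; rewrite !scale1r. Qed.
Lemma klin_0 (k : comPzRingType) (M N : lmodType k) (g : M -> N) : klin g -> g 0 = 0.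
Proof. by move=> h; apply: (@addrI _ (g 0)); rewrite -klin_add // !addr0. Qed.
Lemma klin_scale (k : comPzRingType) (M N : lmodType k) (g : M -> N) :
  klin g -> forall c m, g (c *: m) = c *: g m.
Proof. by move=> h c m; have := h c m 0; rewrite !addr0 klin_0 // addr0. Qed.
Lemma klin_sum (k : comPzRingType) (M N : lmodType k) (g : M -> N) (I : Type) (r : seq I) F :
  klin g -> g (\sum_(i <- r) F i) = \sum_(i <- r) g (F i).
Proof.
move=> h; elim: r => [|i r IH]; first by rewrite !big_nil klin_0.
by rewrite !big_cons klin_add // IH.
Qed.

Lemma sum_invk (k : pzRingType) (M N : lmodType k) (V : zmodType) (beta : M -> N -> V) :
  (forall m m' n, beta (m + m') n = beta m n + beta m' n) ->
  (forall m n n', beta m (n + n') = beta m n + beta m n') ->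
  (forall c m n, beta (c *: m) n = beta m (c *: n)) ->
  forall s t, teqk s t -> \sum_(p <- s) beta p.1 p.2 = \sum_(p <- t) beta p.1 p.2.
Proof.
move=> hl hr hb; apply: sum_inv => // m n m' n' [c [-> ->]]; exact: hb.
Qed.

Lemma tscale1 (k : pzRingType) (M : lmodType k) (N : Type) (s : seq (M * N)) :
  tscale 1 s = s.
Proof. by elim: s => [|[m n] s IH] //=; rewrite scale1r IH. Qed.
Lemma tscaleN1 (k : pzRingType) (M : lmodType k) (N : Type) (s : seq (M * N)) :
  tscale (-1) s = [seq (- p.1, p.2) | p <- s].
Proof. by elim: s => [|[m n] s IH] //=; rewrite scaleN1r IH. Qed.



Lemma Lift_single (S T : Type) (f : S -> T) s : Lift (fun p => [:: f p]) s = map f s.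
Proof. by rewrite /Lift; elim: s => //= p s ->. Qed.
Lemma Lift_map (S S' T : Type) (F : S' -> seq T) (f : S -> S') s :
  Lift F (map f s) = Lift (fun p => F (f p)) s.
Proof. by rewrite /Lift -map_comp. Qed.
Lemma Lift_Lift (S S' T : Type) (F : S' -> seq T) (G : S -> seq S') s :
  Lift F (Lift G s) = Lift (fun p => Lift F (G p)) s.
Proof. by elim: s => //= p s IH; rewrite !Lift_cons Lift_cat IH. Qed.
Lemma map_Lift (S S' T : Type) (f : S' -> T) (G : S -> seq S') s :
  map f (Lift G s) = Lift (fun p => map f (G p)) s.
Proof. by elim: s => //= p s IH; rewrite !Lift_cons map_cat IH. Qed.
Lemma teq_Lift_id (M N : zmodType) bal (F : M * N -> seq (M * N)) s :
  (forall p, teq bal (F p) [:: p]) -> teq bal (Lift F s) s.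
Proof.
move=> h; elim: s => [|p s IH]; first exact: teq_refl.
rewrite Lift_cons; exact (teq_cat (h p) IH).
Qed.

Section Main.
Variables (k : comPzRingType) (X : Type) (H : X -> X -> lmodType k)
  (mulH : forall x y z, H x y -> H y z -> H x z) (oneH : forall x, H x x)
  (Delta : forall x y, H x y -> seq (H x y * H x y))
  (eps : forall x y, H x y -> k)
  (A : X -> X -> lmodType k)
  (mulA : forall x y z, A x y -> A y z -> A x z) (oneA : forall x, A x x)
  (rho : forall x y, A x y -> seq (A x y * H x y)).
Hypotheses (hH : semi_hopf_cat mulH oneH Delta eps)
  (hA : comodule_cat mulH oneH Delta eps mulA oneA rho).

Let lcA := cc_lincat hA.
Let lcH := sh_lincat hH.

Lemma rho_add x y (a a' : A x y) : teqk (rho (a + a')) (rho a ++ rho a').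
Proof. by have := cc_rho_lin hA 1 a a'; rewrite scale1r tscale1. Qed.

Lemma rho_0 x y : teqk (rho (0 : A x y)) [::].
Proof. apply: teq_dup; have := rho_add (0 : A x y) 0; rewrite addr0; exact. Qed.

Lemma coinv0 x : coinv oneH rho (0 : A x x).
Proof. exact: (teq_trans (rho_0 x x) (teq_sym (teq_0l _))). Qed.

Lemma coinv1 x : coinv oneH rho (oneA x).
Proof. exact: cc_rho_one hA x. Qed.

Lemma teq_lm z w y (N : lmodType k) (a : A z w) (s t : seq (A w y * N)) :
  teqk s t -> teqk [seq (mulA a p.1, p.2) | p <- s] [seq (mulA a p.1, p.2) | p <- t].
Proof.
move=> h; rewrite -!(Lift_single (fun p => (mulA a p.1, p.2))).
apply: (teq_Lift _ _ _ _ _ h) => /=.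
- move=> m m' n0; rewrite (lcm_addr lcA); exact: teq_addl.
- move=> m n0 n'; exact: teq_addr.
- move=> n0; rewrite (lcm_0r lcA); exact: teq_0l.
- move=> m; exact: teq_0r.
- move=> m n0 m' n' [c [-> ->]]; apply: teq_bal; exists c; split => //.
  by rewrite (lcm_scaler lcA).
Qed.

Definition phi' w x y (r : seq (A x y * H x y)) (p : A w x * H w x) :=
  [seq (mulA p.1 q.1, mulH p.2 q.2) | q <- r].

Lemma teq_phi' w x y (r : seq (A x y * H x y)) s t :
  teqk s t -> teqk (Lift (@phi' w x y r) s) (Lift (@phi' w x y r) t).
Proof.
move=> h; apply: (teq_Lift _ _ _ _ _ h) => /=.
- move=> m m' n0; rewrite /phi' /=.
  under eq_map => q do rewrite (lcm_addl lcA).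
  exact: (teq_splitl _ (fun q => mulA m q.1) (fun q => mulA m' q.1)).
- move=> m n0 n'; rewrite /phi' /=.
  under eq_map => q do rewrite (lcm_addl lcH).
  exact: (teq_splitr _ (fun q => mulH n0 q.2) (fun q => mulH n' q.2)).
- move=> n0; rewrite /phi' /=.
  under eq_map => q do rewrite (lcm_0l lcA).
  exact: teq_zerol.
- move=> m; rewrite /phi' /=.
  under eq_map => q do rewrite (lcm_0l lcH).
  exact: teq_zeror.
- move=> m n0 m' n' [c [-> ->]]; rewrite /phi' /=.
  apply: teq_map => q; apply: teq_bal; exists c.
  by rewrite (lcm_scalel lcA) (lcm_scalel lcH).
Qed.

Lemma rho_coinv_mul x y (b : A x x) (e : A x y) : coinv oneH rho b ->
  teqk (rho (mulA b e)) [seq (mulA b q.1, q.2) | q <- rho e].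
Proof.
move=> hb.
apply: (teq_trans (cc_rho_mul hA b e)).
have -> : [seq (mulA p.1 q.1, mulH p.2 q.2) | p <- rho b, q <- rho e]
   = Lift (@phi' x x y (rho e)) (rho b) by [].
apply: (teq_trans (teq_phi' _ hb)).
rewrite Lift1 /phi' /=.
under eq_map => q do rewrite (lc_1l lcH).
exact: teq_refl.
Qed.

Definition phican z x y (p : A z x * A x y) := [seq (mulA p.1 q.1, q.2) | q <- rho p.2].

Lemma can_Lift z x y s : can mulA rho s = Lift (@phican z x y) s.
Proof. by []. Qed.

Lemma can_wd z x y (s t : seq (A z x * A x y)) :
  teqB oneH mulA rho s t -> teqk (can mulA rho s) (can mulA rho t).
Proof.
move=> h; rewrite !can_Lift; apply: (teq_Lift _ _ _ _ _ h) => /=.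
- move=> m m' n0; rewrite /phican /=.
  under eq_map => q do rewrite (lcm_addl lcA).
  exact: (teq_splitl _ (fun q => mulA m q.1) (fun q => mulA m' q.1)).
- move=> m n0 n'; rewrite /phican /= -map_cat; exact: teq_lm (rho_add _ _).
- move=> n0; rewrite /phican /=.
  under eq_map => q do rewrite (lcm_0l lcA).
  exact: teq_zerol.
- move=> m; rewrite /phican /=; exact: teq_lm (rho_0 _ _).
- move=> m n0 m' n' [b [hb -> ->]]; rewrite /phican /=.
  apply: teq_sym; apply: (teq_trans (teq_lm m' (rho_coinv_mul n0 hb))).
  rewrite -map_comp; under eq_map => q do rewrite /= -(lc_assoc lcA).
  exact: teq_refl.
Qed.

Section Fixed.
Variables (x y : X) (n : nat) (f : A x y -> 'I_n -> A x x) (g : ('I_n -> A x x) -> A x y).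
Hypotheses (hf_coinv : forall a i, coinv oneH rho (f a i))
  (hf_lin : forall (b : A x x) (a a' : A x y), coinv oneH rho b ->
           forall i, f (mulA b a + a') i = mulA b (f a i) + f a' i)
  (hg_lin : forall (b : A x x) (v w : 'I_n -> A x x), coinv oneH rho b ->
           (forall i, coinv oneH rho (v i)) -> (forall i, coinv oneH rho (w i)) ->
           g (fun i => mulA b (v i) + w i) = mulA b (g v) + g w)
  (hgf : forall a, g (f a) = a).

Definition e (i : 'I_n) := g (fun j => if j == i then oneA x else 0).

Lemma g0 : g (fun _ => 0) = 0.
Proof.
have := hg_lin (coinv1 x) (fun _ => coinv0 x) (fun _ => coinv0 x).
have -> : (fun _ : 'I_n => mulA (oneA x) (0 : A x x) + 0) = (fun _ => 0).
  by apply: functional_extensionality => j; rewrite (lc_1l lcA) addr0.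
rewrite (lc_1l lcA) => h.
by apply: (@addrI _ (g (fun _ => 0))); rewrite -h addr0.
Qed.

Lemma g_expand (v : 'I_n -> A x x) : (forall i, coinv oneH rho (v i)) ->
  g v = \sum_(i <- enum 'I_n) mulA (v i) (e i).
Proof.
move=> hv.
suff H0 : forall r, uniq r -> g (fun j => if j \in r then v j else 0)
                       = \sum_(i <- r) mulA (v i) (e i).
  have := H0 (enum 'I_n) (enum_uniq _); rewrite -H0 ?enum_uniq //.
  have -> // : (fun j => if j \in enum 'I_n then v j else 0) = v.
  by apply: functional_extensionality => j; rewrite mem_enum.
elim => [|i r IH] /=.
  by rewrite big_nil -g0.
case/andP => nir ur.
have -> : (fun j => if j \in i :: r then v j else 0) =
  (fun j => mulA (v i) (if j == i then oneA x else 0) + (if j \in r then v j else 0)).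
  apply: functional_extensionality => j; rewrite in_cons.
  case: eqVneq => [->|_] /=.
    by rewrite (negbTE nir) (lc_1r lcA) addr0.
  by rewrite (lcm_0r lcA) add0r.
rewrite hg_lin //; last first.
- by move=> j; case: ifP => _; [exact: hv | exact: coinv0].
- by move=> j; case: ifP => _; [exact: coinv1 | exact: coinv0].
by rewrite IH // big_cons.
Qed.

Lemma f_expand a : a = \sum_(i <- enum 'I_n) mulA (f a i) (e i).
Proof. by rewrite -g_expand // hgf. Qed.


Variables (nH : nat) (fH : H x y -> 'I_nH -> k) (gH : ('I_nH -> k) -> H x y).
Hypotheses (hfH : forall (c : k) (h h' : H x y) i, fH (c *: h + h') i = c * fH h i + fH h' i)
  (hgH : forall (c : k) (v w : 'I_nH -> k), gH (fun i => c * v i + w i) = c *: gH v + gH w)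
  (hgfH : forall h, gH (fH h) = h).

Definition hj (j : 'I_nH) := gH (fun i => if i == j then 1 else 0).

Lemma gH0 : gH (fun _ => 0) = 0.
Proof.
have := hgH 1 (fun _ => 0) (fun _ => 0).
have -> : (fun _ : 'I_nH => 1 * (0 : k) + 0) = (fun _ => 0).
  by apply: functional_extensionality => j; rewrite mul1r addr0.
rewrite scale1r => h.
by apply: (@addrI _ (gH (fun _ => 0))); rewrite -h addr0.
Qed.

Lemma H_expand h : h = \sum_(j <- enum 'I_nH) fH h j *: hj j.
Proof.
suff H0 : forall r, uniq r -> gH (fun j => if j \in r then fH h j else 0)
                       = \sum_(i <- r) fH h i *: hj i.
  rewrite -H0 ?enum_uniq //.
  have -> : (fun j => if j \in enum 'I_nH then fH h j else 0) = fH h.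
    by apply: functional_extensionality => j; rewrite mem_enum.
  by rewrite hgfH.
elim => [|i r IH] /=.
  by rewrite big_nil -gH0.
case/andP => nir ur.
have -> : (fun j => if j \in i :: r then fH h j else 0) =
  (fun j => fH h i * (if j == i then 1 else 0) + (if j \in r then fH h j else 0)).
  apply: functional_extensionality => j; rewrite in_cons.
  case: eqVneq => [->|_] /=.
    by rewrite (negbTE nir) mulr1 addr0.
  by rewrite mulr0 add0r.
by rewrite hgH IH // big_cons.
Qed.

Lemma fH_scale c h i : fH (c *: h) i = c * fH h i.
Proof.
have := hfH c h 0 i; have := hfH 1 0 0 i; rewrite !addr0 scale1r mul1r => h0.
have z : fH 0 i = 0 by apply: (@addrI _ (fH 0 i)); rewrite -h0 addr0.
by rewrite z addr0.
Qed.

Lemma fH_add h h' i : fH (h + h') i = fH h i + fH h' i.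
Proof. by have := hfH 1 h h' i; rewrite scale1r mul1r. Qed.

Lemma decomp (M : lmodType k) (t : seq (M * H x y)) :
  teqk t [seq (\sum_(p <- t) fH p.2 j *: p.1, hj j) | j <- enum 'I_nH].
Proof.
apply: teq_sym.
apply: (teq_trans (teq_sym (teq_groupl _ (fun p j => fH p.2 j *: p.1) hj t (enum 'I_nH)))).
apply: teq_Lift_id => [[m h]] /=.
rewrite [X in [:: (m, X)]](H_expand h).
apply: teq_sym; apply: (teq_trans (teq_sumr _ m _ _)).
apply: teq_map => j; apply: teq_sym; apply: teq_bal; exists (fH h j); split => //.
Qed.

Lemma criterion (M : lmodType k) (t t' : seq (M * H x y)) :
  (forall j, \sum_(p <- t) fH p.2 j *: p.1 = \sum_(p <- t') fH p.2 j *: p.1) ->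
  teqk t t'.
Proof.
move=> h; apply: (teq_trans (decomp t)); apply: teq_sym; apply: (teq_trans (decomp t')).
under eq_map => j do rewrite -h. exact: teq_refl.
Qed.

Definition Ev (M : lmodType k) (t : seq (M * H x y)) j := \sum_(p <- t) fH p.2 j *: p.1.

Lemma Ev_inv (M : lmodType k) (t t' : seq (M * H x y)) j : teqk t t' -> Ev t j = Ev t' j.
Proof.
apply: (sum_invk (beta := fun m h => fH h j *: m)) => /=.
- by move=> m m' h; rewrite scalerDr.
- by move=> m h h'; rewrite fH_add scalerDl.
- by move=> c m h; rewrite fH_scale scalerA mulrC.
Qed.

Lemma Ev_cat (M : lmodType k) (t t' : seq (M * H x y)) j : Ev (t ++ t') j = Ev t j + Ev t' j.
Proof. by rewrite /Ev big_cat. Qed.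

Lemma Ev_rho_add (a a' : A x y) j : Ev (rho (a + a')) j = Ev (rho a) j + Ev (rho a') j.
Proof. by rewrite (Ev_inv j (rho_add a a')) Ev_cat. Qed.

Lemma Ev_rho_0 j : Ev (rho (0 : A x y)) j = 0.
Proof. by rewrite (Ev_inv j (rho_0 x y)) /Ev big_nil. Qed.

Lemma Ev_rho_sum (I : Type) (r : seq I) (F : I -> A x y) j :
  Ev (rho (\sum_(i <- r) F i)) j = \sum_(i <- r) Ev (rho (F i)) j.
Proof.
elim: r => [|i r IH]; first by rewrite !big_nil Ev_rho_0.
by rewrite !big_cons Ev_rho_add IH.
Qed.

Lemma Ev_rho_coinv_mul (b : A x x) (a : A x y) j : coinv oneH rho b ->
  Ev (rho (mulA b a)) j = \sum_(q <- rho a) fH q.2 j *: mulA b q.1.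
Proof. by move=> hb; rewrite (Ev_inv j (rho_coinv_mul a hb)) /Ev big_map. Qed.

Variables (gam : 'I_n -> H x y -> A y x).
Hypotheses (hgam : forall i, klin (gam i))
  (hgamd : forall i a, delta mulA rho (gam i) a = f a i)
  (hinj : forall g g' : H x y -> A y y, klin g -> klin g' ->
     (forall a, delta mulA rho g a = delta mulA rho g' a) -> forall h, g h = g' h).

Definition psi j h := \sum_(i <- enum 'I_n) \sum_(q <- rho (e i)) fH q.2 j *: mulA (gam i h) q.1.

Lemma psi_key j h : psi j h = fH h j *: oneA y.
Proof.
apply: (hinj (g := psi j) (g' := fun h => fH h j *: oneA y)).
- move=> c h1 h2; rewrite /psi scaler_sumr -big_split; apply: eq_bigr => i _.
  rewrite scaler_sumr -big_split; apply: eq_bigr => q _ /=.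
  by rewrite hgam (lcm_addl lcA) (lcm_scalel lcA) scalerDr !scalerA mulrC.
- by move=> c h1 h2 /=; rewrite hfH scalerDl scalerA.
move=> a; rewrite /delta /=.
transitivity (\sum_(i <- enum 'I_n) \sum_(q <- rho (e i)) fH q.2 j *: mulA (f a i) q.1).
  rewrite /psi.
  under eq_bigr => p _ do rewrite (lcm_sumr lcA).
  rewrite exchange_big /=; apply: eq_bigr => i _.
  under eq_bigr => p _ do rewrite (lcm_sumr lcA).
  rewrite exchange_big /=; apply: eq_bigr => q _.
  rewrite -hgamd /delta (lcm_suml lcA) scaler_sumr; apply: eq_bigr => p _.
  by rewrite (lcm_scaler lcA) (lc_assoc lcA).
transitivity (Ev (rho a) j).
  rewrite [in RHS](f_expand a) Ev_rho_sum; apply: eq_bigr => i _.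
  by rewrite Ev_rho_coinv_mul.
rewrite /Ev; apply: eq_bigr => p _.
by rewrite (lcm_scaler lcA) (lc_1r lcA).
Qed.

Definition Phi h := Lift (fun i => [seq (mulA (gam i h) q.1, q.2) | q <- rho (e i)]) (enum 'I_n).

Lemma Phi_key h : teqk (Phi h) [:: (oneA y, h)].
Proof.
apply: criterion => j.
rewrite big_cons big_nil addr0 /= -psi_key /psi /Phi /Lift big_flatten big_map.
apply: eq_bigr => i _; rewrite big_map; exact: eq_bigr.
Qed.

Definition kappa z (p : A z y * H x y) : seq (A z x * A x y) :=
  [seq (mulA p.1 (gam i p.2), e i) | i <- enum 'I_n].

Lemma kappa_wd z (u v : seq (A z y * H x y)) :
  teqk u v -> teqB oneH mulA rho (Lift (@kappa z) u) (Lift (@kappa z) v).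
Proof.
move=> huv; apply: (teq_Lift _ _ _ _ _ huv) => /=.
- move=> m m' h; rewrite /kappa /=.
  under eq_map => i do rewrite (lcm_addl lcA).
  exact: (teq_splitl _ (fun i => mulA m (gam i h)) (fun i => mulA m' (gam i h))).
- move=> m h h'; rewrite /kappa /=.
  under eq_map => i do rewrite (klin_add (hgam i)) (lcm_addr lcA).
  exact: (teq_splitl _ (fun i => mulA m (gam i h)) (fun i => mulA m (gam i h'))).
- move=> h; rewrite /kappa /=.
  under eq_map => i do rewrite (lcm_0l lcA).
  exact: teq_zerol.
- move=> m; rewrite /kappa /=.
  under eq_map => i do rewrite (klin_0 (hgam i)) (lcm_0r lcA).
  exact: teq_zerol.
- move=> m h m' h' [c [-> ->]]; rewrite /kappa /=.
  under eq_map => i do rewrite (lcm_scalel lcA) -(lcm_scaler lcA) -(klin_scale (hgam i)).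
  exact: teq_refl.
Qed.

Lemma K1 z (s : seq (A z x * A x y)) :
  teqB oneH mulA rho (Lift (@kappa z) (can mulA rho s)) s.
Proof.
rewrite can_Lift Lift_Lift; apply: teq_Lift_id => [[a a']] /=.
rewrite /phican Lift_map /kappa /=.
apply: (teq_trans (teq_groupl _ (fun q i => mulA (mulA a q.1) (gam i q.2)) e _ _)).
have E i : \sum_(q <- rho a') mulA (mulA a q.1) (gam i q.2) = mulA a (f a' i).
  rewrite -hgamd /delta (lcm_sumr lcA); apply: eq_bigr => q _.
  by rewrite (lc_assoc lcA).
under eq_map => i do rewrite E.
apply: (teq_trans (teq_map (G := fun i => (a, mulA (f a' i) (e i))) _ _)).
  move=> i; apply: teq_bal; exists (f a' i); split => //.
rewrite [X in teq _ _ [:: (a, X)]](f_expand a').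
apply: teq_sym; exact: teq_sumr.
Qed.

Lemma K2 z (u : seq (A z y * H x y)) :
  teqk (can mulA rho (Lift (@kappa z) u)) u.
Proof.
rewrite can_Lift Lift_Lift; apply: teq_Lift_id => [[a h]] /=.
have -> : Lift (@phican z x y) (kappa (a, h)) = [seq (mulA a p.1, p.2) | p <- Phi h].
  rewrite /kappa Lift_map /Phi map_Lift /Lift; congr flatten; apply: eq_map => i /=.
  rewrite /phican /= -map_comp; apply: eq_map => q /=.
  by rewrite (lc_assoc lcA).
apply: (teq_trans (teq_lm a (Phi_key h))).
rewrite /= (lc_1r lcA); exact: teq_refl.
Qed.

Lemma can_bij_fixed z : can_bij oneH mulA rho z x y.
Proof.
split.
- exact: can_wd.
- move=> s t hst.
  apply: (teq_trans (teq_sym (K1 s))).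
  apply: (teq_trans (kappa_wd hst)).
  exact: K1.
- move=> u; exists (Lift (@kappa z) u); exact: K2.
Qed.

End Fixed.
End Main.


Theorem proposition7p3 (k : comPzRingType) (X : Type)
  (H : X -> X -> lmodType k)
  (mulH : forall x y z, H x y -> H y z -> H x z) (oneH : forall x, H x x)
  (Delta : forall x y, H x y -> seq (H x y * H x y))
  (eps : forall x y, H x y -> k)
  (A : X -> X -> lmodType k)
  (mulA : forall x y z, A x y -> A y z -> A x z) (oneA : forall x, A x x)
  (rho : forall x y, A x y -> seq (A x y * H x y)) :
  semi_hopf_cat mulH oneH Delta eps ->
  comodule_cat mulH oneH Delta eps mulA oneA rho ->
  (forall x y : X, fgp_left_coinv oneH mulA rho x y) ->
  (forall x y : X, exists (n : nat) (f : H x y -> 'I_n -> k) (g : ('I_n -> k) -> H x y),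
      [/\ forall (c : k) (h h' : H x y) i, f (c *: h + h') i = c * f h i + f h' i,
          forall (c : k) (v w : 'I_n -> k), g (fun i => c * v i + w i) = c *: g v + g w
        & forall h, g (f h) = h]) ->
  (forall x y : X, delta_bij oneH mulA rho x y x /\ delta_bij oneH mulA rho x y y) ->
  forall x y z : X, can_bij oneH mulA rho z x y.
Proof.
move=> hH hA hfgp hHfgp hdelta x y z.
case: (hfgp x y) => n [f [g [hf1 hf2 hg hgf]]].
case: (hHfgp x y) => nH [fH [gH [h1 h2 h3]]].
case: (hdelta x y) => [[_ hsurj] [hinj _]].
have : forall i : 'I_n, exists gm : H x y -> A y x,
    klin gm /\ forall a, delta mulA rho gm a = f a i.
  move=> i; apply: hsurj => b a a' hb; exact: hf2.
case/functional_choice => gam hgam.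
exact: (can_bij_fixed hH hA hf1 hg hgf h1 h2 h3
          (fun i => proj1 (hgam i)) (fun i => proj2 (hgam i)) hinj z).
Qed.
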